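(* Let $\mathscr D:\mathscr N=\mathscr N_1\cup\cdots\cup\mathscr N_k$ be a pairwise binary-sized decomposition of a chemical reaction network $\mathscr N$ such that at least one linkage class of $\mathscr N$ does not contain a common complex. Let $\mathscr N'$ and $\mathscr N'_i$ be the networks obtained by removing from $\mathscr N$ and $\mathscr N_i$, respectively, their $\mathscr C_{\mathscr D}$-linkage classes. Then $\mathscr D':\mathscr N'=\mathscr N'_1\cup\cdots\cup\mathscr N'_k$ is a $\mathscr C$-decomposition if $\mathscr D'$ is non-trivial.
   Context: A CRN $\mathscr N=(\mathscr S,\mathscr C,\mathscr R)$ is viewed as a directed graph on its complexes with arcs its reactions; linkage classes are the connected components of the underlying undirected graph. A decomposition $\mathscr N=\mathscr N_1\cup\cdots\cup\mathscr N_k$ is given by a partition $\{\mathscr R_1,\dots,\mathscr R_k\}$ of the reaction set; the subnetwork $\mathscr N_i$ has reactions $\mathscr R_i$ and complex set $\mathscr C_i$ the complexes occurring in reactions of $\mathscr R_i$. The length of a decomposition is the number of (nonempty) subnetworks; it is empty if the length is 0, trivial if the length is 1, and non-trivial otherwise. The set $\mathscr C_{\mathscr D}$ of common complexes consists of the complexes lying in the complex sets of at least two distinct subnetworks; $d=|\mathscr C_{\mathscr D}|$. A $\mathscr C_{\mathscr D}$-linkage class (of $\mathscr N$ or of some $\mathscr N_i$) is a linkage class containing an element of $\mathscr C_{\mathscr D}$; removing linkage classes means removing their reactions (and complexes). The decomposition is pairwise binary-sized if there are integers $0\le b\le c\le d$ with $|\mathscr C_i\cap\mathscr C_j|\in\{b,c\}$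 for all $i\ne j$. A $\mathscr C$-decomposition is a decomposition in which the complex sets of distinct subnetworks are pairwise disjoint. *)

(* Defs.v *)
(* A CRN is viewed as a directed graph on its complexes.
   Complexes are elements of an arbitrary finite type [T] (e.g. nonnegative
   integer vectors over the species); a network is given by its finite set of
   reactions, i.e. pairs (reactant complex, product complex). *)
From mathcomp Require Import all_boot.
Set Implicit Arguments. Unset Strict Implicit. Unset Printing Implicit Defensive.

Section CRN.
Variable T : finType.

Definition is_CRN (R : {set T * T}) : Prop := forall r, r \in R -> r.1 != r.2.

Definition complexes (R : {set T * T}) : {set T} :=
  [set y | [exists r in R, (r.1 == y) || (r.2 == y)]].

Definition und_adj (R : {set T * T}) : rel T :=
  fun x y => ((x, y) \in R) || ((y, x) \in R).

Definition linkage_classes (R : {set T * T}) : {set {set T}} :=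
  [set [set y | connect (und_adj R) x y] | x in complexes R].

Definition reactions_of (R : {set T * T}) (L : {set T}) : {set T * T} :=
  [set r in R | r.1 \in L].

Definition remove_CD_classes (R : {set T * T}) (CD : {set T}) : {set T * T} :=
  R :\: \bigcup_(L in linkage_classes R | ~~ [disjoint L & CD]) reactions_of R L.

(* a decomposition of R: a partition of the reaction set indexed by 'I_k
   (blocks may be empty; the length counts nonempty blocks) *)
Definition is_decomposition (R : {set T * T}) k (Rs : 'I_k -> {set T * T}) : Prop :=
  (\bigcup_(i < k) Rs i = R) /\ (forall i j, i != j -> [disjoint Rs i & Rs j]).

Definition dec_length k (Rs : 'I_k -> {set T * T}) : nat := #|[set i | Rs i != set0]|.

Definition nontrivial_dec k (Rs : 'I_k -> {set T * T}) : Prop := 1 < dec_length Rs.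

Definition common_complexes k (Rs : 'I_k -> {set T * T}) : {set T} :=
  [set y | 1 < #|[set i | y \in complexes (Rs i)]|].

Definition pairwise_binary_sized k (Rs : 'I_k -> {set T * T}) : Prop :=
  exists b c, b <= c <= #|common_complexes Rs| /\
    forall i j, i != j ->
      (#|complexes (Rs i) :&: complexes (Rs j)| == b) ||
      (#|complexes (Rs i) :&: complexes (Rs j)| == c).

Definition is_C_decomposition (R : {set T * T}) k (Rs : 'I_k -> {set T * T}) : Prop :=
  is_decomposition R Rs /\
  forall i j, i != j -> [disjoint complexes (Rs i) & complexes (Rs j)].

End CRN.

(* Main.v *)
Require Import Defs.
From mathcomp Require Import all_boot.
Set Implicit Arguments. Unset Strict Implicit. Unset Printing Implicit Defensive.

Section Aux.
Variable T : finType.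

Lemma my_disjP (A B : {set T}) :
  reflect (forall x, x \in A -> x \in B -> False) [disjoint A & B].
Proof.
rewrite disjoints_subset; apply: (iffP subsetP) => H x.
  by move=> xA xB; move: (H x xA); rewrite inE xB.
by move=> xA; rewrite inE; apply/negP => xB; apply: H xA xB.
Qed.

Lemma und_sym (S : {set T * T}) : symmetric (und_adj S).
Proof. by move=> x y; rewrite /und_adj orbC. Qed.

Lemma in_complexes1 (S : {set T * T}) r : r \in S -> r.1 \in complexes S.
Proof. by move=> rS; rewrite inE; apply/existsP; exists r; rewrite rS eqxx. Qed.

Lemma in_complexes2 (S : {set T * T}) r : r \in S -> r.2 \in complexes S.
Proof. by move=> rS; rewrite inE; apply/existsP; exists r; rewrite rS eqxx orbT. Qed.

Lemma complexesP (S : {set T * T}) y :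
  y \in complexes S -> exists2 r, r \in S & (r.1 == y) || (r.2 == y).
Proof. by rewrite inE => /existsP[r /andP[rS H]]; exists r. Qed.

Lemma und_complexes (S : {set T * T}) x y :
  und_adj S x y -> x \in complexes S /\ y \in complexes S.
Proof.
case/orP => H.
  by split; [exact: (in_complexes1 H) | exact: (in_complexes2 H)].
by split; [exact: (in_complexes2 H) | exact: (in_complexes1 H)].
Qed.

Lemma removeP (S : {set T * T}) (CD : {set T}) r :
  r \in remove_CD_classes S CD <->
  r \in S /\ ~ exists2 z, z \in CD & connect (und_adj S) r.1 z.
Proof.
rewrite /remove_CD_classes; split.
  move=> /setDP[rS nr]; split=> // [[z zC cz]]; move/negP: nr; apply.
  apply/bigcupP; exists [set y | connect (und_adj S) r.1 y].
    rewrite /linkage_classes; apply/andP; split.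
      by apply/imsetP; exists r.1 => //; apply: in_complexes1.
    apply/negP => /my_disjP H; apply: (H z) => //; by rewrite inE.
  by rewrite inE rS inE connect0.
move=> [rS nex]; apply/setDP; split=> //; apply/negP => /bigcupP[L /andP[]].
move=> /imsetP[x _ ->] /negP nd; rewrite inE rS /= inE => cx.
apply: nd; apply/my_disjP => z; rewrite inE => cz zC; apply: nex; exists z => //.
apply: connect_trans _ cz; by rewrite (sym_connect_sym (@und_sym S)).
Qed.

End Aux.

Theorem theorem5 (T : finType) (R : {set T * T}) (k : nat) (Rs : 'I_k -> {set T * T}) :
  is_CRN R ->
  is_decomposition R Rs ->
  pairwise_binary_sized Rs ->
  (exists2 L, L \in linkage_classes R & [disjoint L & common_complexes Rs]) ->
  let CD := common_complexes Rs in
  let R' := remove_CD_classes R CD in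
  let Rs' := fun i => remove_CD_classes (Rs i) CD in
  nontrivial_dec Rs' ->
  is_C_decomposition R' Rs'.
Proof.
move=> _ [Hcup Hdis] _ _ CD R' Rs' _.
have inCD : forall y i j, i != j -> y \in complexes (Rs i) -> y \in complexes (Rs j) -> y \in CD.
  move=> y i j ij yi yj; rewrite inE.
  rewrite (cardD1 i) inE yi add1n ltnS lt0n; apply/pred0Pn; exists j.
  by apply/andP; split; [rewrite eq_sym | rewrite inE].
have RsR : forall i, Rs i \subset R.
  by move=> i; rewrite -Hcup; apply: (bigcup_sup i).
have inRs : forall r, r \in R -> exists i, r \in Rs i.
  by move=> r; rewrite -Hcup => /bigcupP[i _ ri]; exists i.
have Rs'sub : forall i, Rs' i \subset Rs i.
  by move=> i; rewrite /Rs' /remove_CD_classes subsetDl.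
have key : forall i p x, x \in complexes (Rs i) -> path (und_adj R) x p ->
    last x p \in CD -> exists2 w, w \in CD & connect (und_adj (Rs i)) x w.
  move=> i; elim=> [|y p IH] x xi /=.
    by move=> _ xC; exists x => //; apply: connect0.
  move=> /andP[exy pp] lC.
  have [j ej] : exists j, und_adj (Rs j) x y.
    case/orP: exy => /inRs[j H]; exists j; by rewrite /und_adj H ?orbT.
  have [xj yj] := und_complexes ej.
  case: (eqVneq i j) => [eij|ij].
    subst j; have [w wC cw] := IH y yj pp lC; exists w => //.
    by apply: connect_trans cw; apply: connect1.
  by exists x; [apply: (inCD x i j ij) | apply: connect0].
split; last first.
  move=> i j ij; apply/my_disjP => y /complexesP[r ri ry] /complexesP[s sj sy].
  have yC : y \in CD.
    apply: (inCD y i j ij).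
      by case/orP: ry => /eqP <-; [apply: in_complexes1 | apply: in_complexes2];
         apply: (subsetP (Rs'sub i)).
    by case/orP: sy => /eqP <-; [apply: in_complexes1 | apply: in_complexes2];
       apply: (subsetP (Rs'sub j)).
  have /removeP [riS nex] := ri; apply: nex; exists y => //.
  case/orP: ry => /eqP <-; first exact: connect0.
  by apply: connect1; rewrite /und_adj -surjective_pairing riS.
split; last first.
  move=> i j ij; exact: disjointW (Rs'sub i) (Rs'sub j) (Hdis i j ij).
apply/setP => r; apply/bigcupP/idP.
  move=> [i _ /removeP [ri nex]]; apply/removeP; split.
    exact: (subsetP (RsR i)).
  move=> [z zC /connectP [p pp lp]].
  have lC : last r.1 p \in CD by rewrite -lp.
  have [w wC cw] := key i p r.1 (in_complexes1 ri) pp lC.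
  by apply: nex; exists w.
move=> /removeP [rR nex]; have [i ri] := inRs r rR; exists i => //.
apply/removeP; split=> // [[z zC cz]]; apply: nex; exists z => //.
move: cz; apply: connect_sub => x y exy; apply: connect1.
by case/orP: exy => H; rewrite /und_adj (subsetP (RsR i) _ H) ?orbT.
Qed.
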